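(* Let $\bm{X}\in\mathbb{R}^{n_1\times r}$, $\bm{Y}\in\mathbb{R}^{n_2\times r}$, and let $\bm{X}_\star,\bm{Y}_\star$ be the ground-truth factors (see context). Suppose there exist a matrix $\bm{P}\in\mathbb{R}^{r\times r}$ with $1/2\le\sigma_r(\bm{P})\le\sigma_1(\bm{P})\le3/2$ and a number $\delta$ such that \[ \max\big\{\|\bm{X}\bm{P}-\bm{X}_\star\|_{\mathrm{F}},\ \|\bm{Y}\bm{P}^{-\top}-\bm{Y}_\star\|_{\mathrm{F}}\big\}\le\delta\le\frac{\sigma_r(\bm{X}_\star)}{80}. \] Then the minimum of $g(\bm{Q})=\|\bm{X}\bm{Q}-\bm{X}_\star\|_{\mathrm{F}}^2+\|\bm{Y}\bm{Q}^{-\top}-\bm{Y}_\star\|_{\mathrm{F}}^2$ over invertible $\bm{Q}\in\mathbb{R}^{r\times r}$ is attained, and a minimizer $\bm{Q}$ (the optimal alignment matrix) satisfies \[ \|\bm{P}-\bm{Q}\|\le\|\bm{P}-\bm{Q}\|_{\mathrm{F}}\le\frac{5\delta}{\sigma_r(\bm{X}_\star)}. \]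
   Context: $\bm{M}_\star\in\mathbb{R}^{n_1\times n_2}$ has rank $r$ and compact SVD $\bm{M}_\star=\bm{U}_\star\bm{\Sigma}_\star\bm{V}_\star^\top$; $\bm{X}_\star=\bm{U}_\star\bm{\Sigma}_\star^{1/2}$, $\bm{Y}_\star=\bm{V}_\star\bm{\Sigma}_\star^{1/2}$. $\sigma_k(\cdot)$ denotes the $k$th largest singular value, $\|\cdot\|$ the spectral norm, and $\bm{P}^{-\top}=(\bm{P}^{-1})^\top$. *)

(* Defs.v *)
From HB Require Import structures.
From mathcomp Require Import all_boot all_order all_algebra.
From mathcomp Require Import classical_sets reals.
Set Implicit Arguments. Unset Strict Implicit. Unset Printing Implicit Defensive.
Import Order.TTheory GRing.Theory Num.Theory.
Local Open Scope ring_scope.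
Local Open Scope classical_set_scope.

Section Defs.
Variable R : realType.

Definition vnorm n (x : 'cV[R]_n) : R := Num.sqrt (\sum_i x i 0 ^+ 2).

Definition frob m n (A : 'M[R]_(m, n)) : R :=
  Num.sqrt (\sum_i \sum_j A i j ^+ 2).

(* k-th largest singular value (k >= 1), via the Courant-Fischer min-max
   formula: sup over k-dimensional subspaces (column spaces of full-column-rank
   S : 'M_(n,k)) of the inf of |A x| over unit vectors x in the subspace. *)
Definition sigma m n (k : nat) (A : 'M[R]_(m, n)) : R :=
  sup [set y | exists S : 'M[R]_(n, k), \rank S = k /\
       y = inf [set z | exists c : 'cV[R]_k,
                  vnorm (S *m c) = 1 /\ z = vnorm (A *m (S *m c))]].

Definition specnorm m n (A : 'M[R]_(m, n)) : R := sigma 1 A.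

Definition sqrt_diag r (s : 'rV[R]_r) : 'M[R]_r := diag_mx (map_mx Num.sqrt s).

Definition Xstar n1 r (U : 'M[R]_(n1, r)) (s : 'rV[R]_r) : 'M[R]_(n1, r) :=
  U *m sqrt_diag s.
Definition Ystar n2 r (V : 'M[R]_(n2, r)) (s : 'rV[R]_r) : 'M[R]_(n2, r) :=
  V *m sqrt_diag s.

Definition galign n1 n2 r (X Xs : 'M[R]_(n1, r)) (Y Ys : 'M[R]_(n2, r))
  (Q : 'M[R]_r) : R :=
  frob (X *m Q - Xs) ^+ 2 + frob (Y *m (invmx Q)^T - Ys) ^+ 2.

Definition is_min_align n1 n2 r (X Xs : 'M[R]_(n1, r)) (Y Ys : 'M[R]_(n2, r))
  (Q : 'M[R]_r) : Prop :=
  Q \in unitmx /\ forall Q' : 'M[R]_r, Q' \in unitmx ->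
    galign X Xs Y Ys Q <= galign X Xs Y Ys Q'.

End Defs.

(* Main.v *)
Require Import Defs.
From HB Require Import structures.
From mathcomp Require Import all_boot all_order all_algebra.
From mathcomp Require Import classical_sets reals.
From mathcomp Require Import all_classical all_reals all_analysis.
From mathcomp Require Import ring lra.
Import Order.TTheory GRing.Theory Num.Theory.
Import numFieldTopology.Exports numFieldNormedType.Exports.
Set Implicit Arguments. Unset Strict Implicit. Unset Printing Implicit Defensive.
Local Open Scope ring_scope.

Section Norms.
Local Open Scope classical_set_scope.
Variable R : realType.

Definition nrm (I : finType) (f : I -> R) : R := Num.sqrt (\sum_i f i ^+ 2).

Lemma nrm_ge0 (I : finType) (f : I -> R) : 0 <= nrm f.
Proof. exact: sqrtr_ge0. Qed.

Lemma sumsq_ge0 (I : finType) (f : I -> R) : 0 <= \sum_i f i ^+ 2.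
Proof. by apply: sumr_ge0 => i _; rewrite sqr_ge0. Qed.

Lemma nrm_sq (I : finType) (f : I -> R) : nrm f ^+ 2 = \sum_i f i ^+ 2.
Proof. by rewrite sqr_sqrtr // sumsq_ge0. Qed.

Lemma lagrange (I : finType) (a b : I -> R) :
  \sum_i \sum_j (a i * b j - a j * b i) ^+ 2 =
  2 * ((\sum_i a i ^+ 2) * (\sum_i b i ^+ 2) - (\sum_i a i * b i) ^+ 2).
Proof.
transitivity (\sum_i \sum_j (a i ^+ 2 * b j ^+ 2 + a j ^+ 2 * b i ^+ 2
   - 2 * (a i * b i * (a j * b j)))).
  by apply: eq_bigr => i _; apply: eq_bigr => j _; ring.
have e1 : \sum_i \sum_j a i ^+ 2 * b j ^+ 2 = (\sum_i a i ^+ 2) * (\sum_i b i ^+ 2).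
  by rewrite mulr_suml; apply: eq_bigr => i _; rewrite mulr_sumr.
have e2 : \sum_i \sum_j a j ^+ 2 * b i ^+ 2 = (\sum_i a i ^+ 2) * (\sum_i b i ^+ 2).
  by rewrite exchange_big /= -e1; apply: eq_bigr => i _; apply: eq_bigr.
have e3 : \sum_i \sum_j (a i * b i * (a j * b j)) = (\sum_i a i * b i) ^+ 2.
  by rewrite expr2 mulr_suml; apply: eq_bigr => i _; rewrite mulr_sumr.
under eq_bigr => i _ do rewrite sumrB big_split /=.
have e4 : \sum_i \sum_j 2 * (a i * b i * (a j * b j)) = 2 * (\sum_i a i * b i) ^+ 2.
  by rewrite -e3 mulr_sumr; apply: eq_bigr => i _; rewrite mulr_sumr.
by rewrite sumrB big_split /= e1 e2 e4; ring.
Qed.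

Lemma CS (I : finType) (a b : I -> R) :
  (\sum_i a i * b i) ^+ 2 <= (\sum_i a i ^+ 2) * (\sum_i b i ^+ 2).
Proof.
have : 0 <= \sum_i \sum_j (a i * b j - a j * b i) ^+ 2.
  by apply: sumr_ge0 => i _; apply: sumr_ge0 => j _; rewrite sqr_ge0.
rewrite lagrange pmulr_rge0 // subr_ge0 //.
Qed.

Lemma CS' (I : finType) (a b : I -> R) :
  \sum_i a i * b i <= nrm a * nrm b.
Proof.
apply: le_trans (ler_norm _) _.
rewrite -sqrtr_sqr /nrm -sqrtrM ?sumsq_ge0 // ler_sqrt ?CS //.
by rewrite mulr_ge0 // sumsq_ge0.
Qed.

Lemma nrm_triangle (I : finType) (f g : I -> R) :
  nrm (fun i => f i + g i) <= nrm f + nrm g.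
Proof.
rewrite -(@ler_pXn2r _ 2) //.
rewrite nrm_sq sqrrD !nrm_sq.
under eq_bigr => i _ do rewrite sqrrD.
rewrite !big_split /= lerD2r lerD2l mulr2n; apply: lerD; exact: CS'.
- by rewrite nnegrE nrm_ge0.
- by rewrite nnegrE addr_ge0 // nrm_ge0.
Qed.

Lemma nrmN (I : finType) (f : I -> R) : nrm (fun i => - f i) = nrm f.
Proof. by rewrite /nrm; congr Num.sqrt; apply: eq_bigr => i _; rewrite sqrrN. Qed.

Lemma nrmZ (I : finType) (c : R) (f : I -> R) : nrm (fun i => c * f i) = `|c| * nrm f.
Proof.
rewrite /nrm; under eq_bigr => i _ do rewrite exprMn.
by rewrite -mulr_sumr sqrtrM ?sqr_ge0 // sqrtr_sqr.
Qed.

Lemma nrm_ext (I : finType) (f g : I -> R) : f =1 g -> nrm f = nrm g.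
Proof. by move=> e; rewrite /nrm; congr Num.sqrt; apply: eq_bigr => i _; rewrite e. Qed.

Lemma nrm_rev (I : finType) (f g : I -> R) :
  nrm f - nrm g <= nrm (fun i => f i - g i).
Proof.
rewrite lerBlDr; apply: le_trans (nrm_triangle (fun i => f i - g i) g).
by rewrite le_eqVlt; apply/orP; left; apply/eqP; apply: nrm_ext => i; rewrite subrK.
Qed.

Lemma vnormE n (x : 'cV[R]_n) : vnorm x = nrm (fun i => x i 0).
Proof. by []. Qed.

Lemma frobE m n (A : 'M[R]_(m, n)) : frob A = nrm (fun p : 'I_m * 'I_n => A p.1 p.2).
Proof. by rewrite /frob /nrm pair_bigA. Qed.

Lemma vnorm_mul m n (A : 'M[R]_(m, n)) (x : 'cV[R]_n) :
  vnorm (A *m x) <= frob A * vnorm x.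
Proof.
rewrite /vnorm /frob -sqrtrM; last by apply: sumr_ge0 => i _; exact: sumsq_ge0.
rewrite ler_sqrt; last by rewrite mulr_ge0 // ?sumsq_ge0 //; apply: sumr_ge0 => i _; exact: sumsq_ge0.
rewrite mulr_suml; apply: ler_sum => i _; rewrite mxE.
exact: (CS (fun j => A i j) (fun j => x j 0)).
Qed.

End Norms.


Section Sig.
Local Open Scope classical_set_scope.
Variable R : realType.

Lemma vnorm_ge0 n (x : 'cV[R]_n) : 0 <= vnorm x.
Proof. exact: sqrtr_ge0. Qed.

Lemma vnormZ n (c : R) (x : 'cV[R]_n) : vnorm (c *: x) = `|c| * vnorm x.
Proof. rewrite !vnormE -nrmZ; apply: nrm_ext => i; by rewrite mxE. Qed.

Lemma vnorm0 n : vnorm (0 : 'cV[R]_n) = 0.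
Proof. by rewrite -(scale0r (0 : 'cV[R]_n)) vnormZ normr0 mul0r. Qed.

Lemma vnorm_eq0 n (x : 'cV[R]_n) : vnorm x = 0 -> x = 0.
Proof.
move=> h; have h2 : \sum_i x i 0 ^+ 2 = 0.
  by rewrite -(nrm_sq (fun i => x i 0)) -vnormE h expr0n.
apply/matrixP => i j; rewrite (ord1 j) mxE.
have := psumr_eq0P (fun i _ => sqr_ge0 (x i 0)) h2 (i := i) isT.
by move/eqP; rewrite sqrf_eq0 => /eqP.
Qed.

Lemma vnorm_gt0 n (x : 'cV[R]_n) : x != 0 -> 0 < vnorm x.
Proof.
move=> nz; rewrite lt_neqAle vnorm_ge0 andbT; apply/eqP => h.
by move/eqP: nz; apply; apply: vnorm_eq0.
Qed.

Lemma vnormD n (x y : 'cV[R]_n) : vnorm (x + y) <= vnorm x + vnorm y.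
Proof.
rewrite !vnormE; apply: le_trans (nrm_triangle _ _).
by rewrite le_eqVlt; apply/orP; left; apply/eqP; apply: nrm_ext => i; rewrite mxE.
Qed.

Lemma vnormB n (x y : 'cV[R]_n) : vnorm x - vnorm y <= vnorm (x - y).
Proof.
rewrite !vnormE; apply: le_trans (nrm_rev _ _) _.
by rewrite le_eqVlt; apply/orP; left; apply/eqP; apply: nrm_ext => i; rewrite !mxE.
Qed.

Lemma frob_ge0 m n (A : 'M[R]_(m, n)) : 0 <= frob A.
Proof. exact: sqrtr_ge0. Qed.

Lemma frobN m n (A : 'M[R]_(m, n)) : frob (- A) = frob A.
Proof. by rewrite !frobE -[RHS]nrmN; apply: nrm_ext => i /=; rewrite mxE. Qed.

Lemma frobD m n (A B : 'M[R]_(m, n)) : frob (A + B) <= frob A + frob B.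
Proof.
rewrite !frobE; apply: le_trans (nrm_triangle _ _).
by rewrite le_eqVlt; apply/orP; left; apply/eqP; apply: nrm_ext => i; rewrite mxE.
Qed.

Lemma sup_le_gen (E : set R) B : (forall y, E y -> y <= B) -> 0 <= B -> sup E <= B.
Proof.
move=> h B0; have [[y Ey]|E0] := pselect (E !=set0).
  by apply: ge_sup; [exists y | move=> z Ez; apply: h].
have -> : E = set0 by apply/seteqP; split => z // Ez; exfalso; apply: E0; exists z.
by rewrite sup0.
Qed.

Lemma inf_le_gen (E : set R) B : (forall y, E y -> 0 <= y) ->
  (forall y, E y -> y <= B) -> 0 <= B -> inf E <= B.
Proof.
move=> h0 h B0; have [[y Ey]|E0] := pselect (E !=set0).
  apply: le_trans (h y Ey); apply: ge_inf => //; exists 0 => z Ez; exact: h0.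
have -> : E = set0 by apply/seteqP; split => z // Ez; exfalso; apply: E0; exists z.
by rewrite inf0.
Qed.

Definition Fset m n k (A : 'M[R]_(m, n)) (S : 'M[R]_(n, k)) :=
  [set z | exists c : 'cV[R]_k, vnorm (S *m c) = 1 /\ z = vnorm (A *m (S *m c))].
Definition Eset m n k (A : 'M[R]_(m, n)) :=
  [set y | exists S : 'M[R]_(n, k), \rank S = k /\ y = inf (Fset A S)].

Lemma sigmaE m n k (A : 'M[R]_(m, n)) : sigma k A = sup (Eset k A).
Proof. by []. Qed.

Lemma Fset_lb m n k (A : 'M[R]_(m, n)) (S : 'M[R]_(n, k)) : has_lbound (Fset A S).
Proof. by exists 0 => z [c [_ ->]]; exact: vnorm_ge0. Qed.

Lemma Eset_ub m n k (A : 'M[R]_(m, n)) y : Eset k A y -> y <= frob A.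
Proof.
move=> [S [_ ->]]; apply: inf_le_gen; last exact: frob_ge0.
  by move=> z [c [_ ->]]; exact: vnorm_ge0.
move=> z [c [h1 ->]]; apply: le_trans (vnorm_mul _ _) _.
by rewrite h1 mulr1.
Qed.

Lemma Eset_hasub m n k (A : 'M[R]_(m, n)) : has_ubound (Eset k A).
Proof. by exists (frob A) => y; exact: Eset_ub. Qed.

Lemma sigma_le_frob m n k (A : 'M[R]_(m, n)) : sigma k A <= frob A.
Proof. by apply: sup_le_gen; [exact: Eset_ub | exact: frob_ge0]. Qed.


Lemma sigma_lower m r (A : 'M[R]_(m, r)) (v : 'cV[R]_r) :
  sigma r A * vnorm v <= vnorm (A *m v).
Proof.
have [->|nz] := eqVneq v 0.
  by rewrite vnorm0 mulr0 vnorm_ge0.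
have vp := vnorm_gt0 nz.
pose u := (vnorm v)^-1 *: v.
have hu : vnorm u = 1 by rewrite vnormZ ger0_norm ?invr_ge0 ?vnorm_ge0 // mulVf // gt_eqF.
suff : sigma r A <= vnorm (A *m u).
  rewrite -scalemxAr vnormZ ger0_norm ?invr_ge0 ?vnorm_ge0 //.
  by rewrite -ler_pdivlMr // mulrC.
apply: ge_sup.
  exists (inf (Fset A 1%:M)); exists 1%:M; split => //; exact: mxrank1.
move=> y [S [hS ->]].
have Su : S \in unitmx by rewrite -row_free_unit /row_free hS.
apply: ge_inf; first exact: Fset_lb.
exists (invmx S *m u); rewrite mulKVmx //.
Qed.

Lemma sigma1_upper m n (A : 'M[R]_(m, n)) (w : 'cV[R]_n) :
  vnorm (A *m w) <= sigma 1 A * vnorm w.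
Proof.
have [->|nz] := eqVneq w 0.
  by rewrite mulmx0 !vnorm0 mulr0.
have wp := vnorm_gt0 nz.
rewrite -ler_pdivrMr //.
have key : forall z, Fset A w z -> z = vnorm (A *m w) / vnorm w.
  move=> z [c [h1 ->]]; move: h1.
  rewrite [c]mx11_scalar mul_mx_scalar -scalemxAr !vnormZ => h1.
  have -> : `|c 0 0| = (vnorm w)^-1.
    by move/(congr1 (fun t => t / vnorm w)): h1; rewrite mulfK ?gt_eqF // mul1r.
  by rewrite mulrC.
have Fne : Fset A w (vnorm (A *m w) / vnorm w).
  exists ((vnorm w)^-1)%:M; rewrite mul_mx_scalar -scalemxAr !vnormZ.
  rewrite ger0_norm ?invr_ge0 ?vnorm_ge0 // mulVf ?gt_eqF //; split => //.
  by rewrite mulrC.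
apply: le_trans (ub_le_sup (Eset_hasub 1 A) _); last first.
  exists w; split; last reflexivity.
  apply/eqP; rewrite eqn_leq rank_leq_col /= lt0n mxrank_eq0 //.
apply: lb_le_inf; first by exists (vnorm (A *m w) / vnorm w).
by move=> z /key ->.
Qed.

End Sig.


Section S3.
Local Open Scope classical_set_scope.
Variable R : realType.

Lemma vnorm_sq n (x : 'cV[R]_n) : vnorm x ^+ 2 = \sum_i x i 0 ^+ 2.
Proof. by rewrite vnormE nrm_sq. Qed.

Lemma frob_sq m n (A : 'M[R]_(m, n)) : frob A ^+ 2 = \sum_j vnorm (col j A) ^+ 2.
Proof.
rewrite /frob sqr_sqrtr; last by apply: sumr_ge0 => i _; apply: sumsq_ge0.
rewrite exchange_big /=; apply: eq_bigr => j _; rewrite vnorm_sq.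
by apply: eq_bigr => i _; rewrite mxE.
Qed.

Lemma col_mulmx m n p (A : 'M[R]_(m, n)) (B : 'M[R]_(n, p)) j :
  col j (A *m B) = A *m col j B.
Proof. by apply/matrixP => i k; rewrite !mxE; apply: eq_bigr => l _; rewrite !mxE. Qed.

Lemma frob_lower m n p (A : 'M[R]_(m, n)) (D : 'M[R]_(n, p)) c :
  0 <= c -> (forall d : 'cV[R]_n, c * vnorm d <= vnorm (A *m d)) ->
  c * frob D <= frob (A *m D).
Proof.
move=> c0 h.
rewrite -(@ler_pXn2r _ 2) //; last by rewrite nnegrE frob_ge0.
  rewrite exprMn !frob_sq mulr_sumr; apply: ler_sum => j _.
  rewrite col_mulmx -exprMn ler_pXn2r // ?nnegrE ?vnorm_ge0 //.
  by rewrite mulr_ge0 // vnorm_ge0.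
by rewrite nnegrE mulr_ge0 // frob_ge0.
Qed.

Lemma unit_of_inj n (A : 'M[R]_n) :
  (forall w : 'cV[R]_n, w != 0 -> A *m w != 0) -> A \in unitmx.
Proof.
move=> h; rewrite unitmxE unitfE; apply/negP => /eqP.
rewrite -det_tr => /eqP /det0P [v vnz vA].
have := h v^T; rewrite -[A]trmxK -trmx_mul vA trmx0 eqxx => /(_ _) //.
suff : v^T != 0 by move=> H /(_ H).
by apply: contra vnz => /eqP /(congr1 trmx); rewrite trmxK trmx0 => ->.
Qed.

Lemma sigma_ge m r (A : 'M[R]_(m, r)) c0 : (0 < r)%N ->
  (forall v : 'cV[R]_r, c0 * vnorm v <= vnorm (A *m v)) -> c0 <= sigma r A.
Proof.
move=> r0 h.
have e1 : (const_mx 1 : 'cV[R]_r) != 0.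
  apply/eqP => /matrixP /(_ (Ordinal r0) 0); rewrite !mxE => /eqP.
  by rewrite oner_eq0.
pose u := (vnorm (const_mx 1 : 'cV[R]_r))^-1 *: (const_mx 1 : 'cV[R]_r).
have hu : vnorm u = 1.
  by rewrite vnormZ ger0_norm ?invr_ge0 ?vnorm_ge0 // mulVf // gt_eqF // vnorm_gt0.
rewrite sigmaE; apply: le_trans (ub_le_sup (Eset_hasub r A) _); last first.
  by exists 1%:M; split; [exact: mxrank1 | reflexivity].
apply: lb_le_inf.
  by exists (vnorm (A *m (1%:M *m u))); exists u; rewrite mul1mx.
move=> z [c [h1 ->]]; apply: le_trans (h _); by rewrite h1 mulr1.
Qed.

End S3.


Section S4.
Local Open Scope classical_set_scope.
Variable R : realType.

Lemma vnorm_sq_mx n (x : 'cV[R]_n) : vnorm x ^+ 2 = (x^T *m x) 0 0.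
Proof. by rewrite vnorm_sq mxE; apply: eq_bigr => i _; rewrite mxE expr2. Qed.

Lemma vnorm_orth m n (U : 'M[R]_(m, n)) (y : 'cV[R]_n) :
  U^T *m U = 1%:M -> vnorm (U *m y) = vnorm y.
Proof.
move=> hU.
have : vnorm (U *m y) ^+ 2 = vnorm y ^+ 2.
  by rewrite !vnorm_sq_mx trmx_mul mulmxA -(mulmxA y^T) hU mulmx1.
by move/eqP; rewrite eqrXn2 ?vnorm_ge0 // => /eqP.
Qed.

Lemma Xstar_lower n1 r (U : 'M[R]_(n1, r)) (s : 'rV[R]_r) (m0 : R) :
  U^T *m U = 1%:M -> 0 <= m0 -> (forall i, m0 <= s 0 i) ->
  forall v : 'cV[R]_r, Num.sqrt m0 * vnorm v <= vnorm (Xstar U s *m v).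
Proof.
move=> hU m00 hm v.
rewrite /Xstar -mulmxA vnorm_orth //.
rewrite -(@ler_pXn2r _ 2) // ?nnegrE ?vnorm_ge0 ?mulr_ge0 ?sqrtr_ge0 ?vnorm_ge0 //.
rewrite exprMn sqr_sqrtr // !vnorm_sq mulr_sumr; apply: ler_sum => i _.
rewrite /sqrt_diag mul_diag_mx !mxE exprMn sqr_sqrtr; last first.
  by apply: le_trans (hm i).
by rewrite ler_wpM2r // sqr_ge0.
Qed.

End S4.


Section Cont.
Local Open Scope classical_set_scope.
Variable R : realType.
Variable N : nat.
Variable x : 'rV[R]_N.

Definition Cf (h : 'rV[R]_N -> R) := {for x, continuous h}.

Lemma Cf_cst c : Cf (fun _ => c).
Proof. exact: cst_continuous. Qed.

Lemma Cf_coord k : Cf (fun v => v 0 k).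
Proof. exact: coord_continuous. Qed.

Lemma Cf_add f g : Cf f -> Cf g -> Cf (fun v => f v + g v).
Proof. move=> hf hg; have := cvgD hf hg. exact. Qed.

Lemma Cf_opp f : Cf f -> Cf (fun v => - f v).
Proof. move=> hf; have := cvgN hf. exact. Qed.

Lemma Cf_mul f g : Cf f -> Cf g -> Cf (fun v => f v * g v).
Proof. move=> hf hg; have := cvgM hf hg. exact. Qed.

Lemma Cf_inv f : f x != 0 -> Cf f -> Cf (fun v => (f v)^-1).
Proof. move=> h hf; have := cvgV h hf. exact. Qed.

Lemma Cf_ext f g : f =1 g -> Cf f -> Cf g.
Proof. by move=> e; rewrite /Cf (funext e). Qed.

Lemma Cf_sum (I : Type) (s : seq I) (P : pred I) (F : I -> 'rV[R]_N -> R) :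
  (forall i, P i -> Cf (F i)) -> Cf (fun v => \sum_(i <- s | P i) F i v).
Proof.
move=> h; elim: s => [|a s IH].
  by apply: (Cf_ext (f := fun _ => 0)) => [v|]; [rewrite big_nil | exact: Cf_cst].
case Pa: (P a).
  apply: (Cf_ext (f := fun v => F a v + \sum_(i <- s | P i) F i v)).
    by move=> v; rewrite big_cons Pa.
  by apply: Cf_add => //; exact: h.
by apply: (Cf_ext (f := fun v => \sum_(i <- s | P i) F i v)) => // v; rewrite big_cons Pa.
Qed.

Lemma Cf_prod (I : Type) (s : seq I) (P : pred I) (F : I -> 'rV[R]_N -> R) :
  (forall i, P i -> Cf (F i)) -> Cf (fun v => \prod_(i <- s | P i) F i v).
Proof.
move=> h; elim: s => [|a s IH].
  by apply: (Cf_ext (f := fun _ => 1)) => [v|]; [rewrite big_nil | exact: Cf_cst].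
case Pa: (P a).
  apply: (Cf_ext (f := fun v => F a v * \prod_(i <- s | P i) F i v)).
    by move=> v; rewrite big_cons Pa.
  by apply: Cf_mul => //; exact: h.
by apply: (Cf_ext (f := fun v => \prod_(i <- s | P i) F i v)) => // v; rewrite big_cons Pa.
Qed.

Definition CM a b (F : 'rV[R]_N -> 'M[R]_(a, b)) := forall i j, Cf (fun v => F v i j).

Lemma CM_cst a b (M : 'M[R]_(a, b)) : CM (fun _ => M).
Proof. move=> i j; exact: Cf_cst. Qed.

Lemma CM_add a b (F G : 'rV[R]_N -> 'M[R]_(a, b)) : CM F -> CM G -> CM (fun v => F v + G v).
Proof. move=> hF hG i j; apply: (Cf_ext (f := fun v => F v i j + G v i j)); first by move=> v; rewrite mxE.
exact: Cf_add. Qed.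

Lemma CM_opp a b (F : 'rV[R]_N -> 'M[R]_(a, b)) : CM F -> CM (fun v => - F v).
Proof. move=> hF i j; apply: (Cf_ext (f := fun v => - F v i j)); first by move=> v; rewrite mxE.
exact: Cf_opp. Qed.

Lemma CM_mul a b c (F : 'rV[R]_N -> 'M[R]_(a, b)) (G : 'rV[R]_N -> 'M[R]_(b, c)) :
  CM F -> CM G -> CM (fun v => F v *m G v).
Proof. move=> hF hG i j; apply: (Cf_ext (f := fun v => \sum_k F v i k * G v k j)); first by move=> v; rewrite mxE.
by apply: Cf_sum => k _; exact: Cf_mul. Qed.

Lemma CM_tr a b (F : 'rV[R]_N -> 'M[R]_(a, b)) : CM F -> CM (fun v => (F v)^T).
Proof. move=> hF i j; apply: (Cf_ext (f := fun v => F v j i)); first by move=> v; rewrite mxE.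
exact: hF. Qed.

Lemma CM_scale a b (f : 'rV[R]_N -> R) (F : 'rV[R]_N -> 'M[R]_(a, b)) :
  Cf f -> CM F -> CM (fun v => f v *: F v).
Proof. move=> hf hF i j; apply: (Cf_ext (f := fun v => f v * F v i j)); first by move=> v; rewrite mxE.
exact: Cf_mul. Qed.


Lemma Cf_det n (F : 'rV[R]_N -> 'M[R]_n) : CM F -> Cf (fun v => \det (F v)).
Proof.
move=> hF; apply: Cf_sum => s _; apply: Cf_mul; first exact: Cf_cst.
by apply: Cf_prod => i _; exact: hF.
Qed.

Lemma CM_minor n (F : 'rV[R]_N -> 'M[R]_n.+1) i j :
  CM F -> CM (fun v => row' i (col' j (F v))).
Proof. move=> hF k l; apply: (Cf_ext (f := fun v => F v (lift i k) (lift j l))); first by move=> v; rewrite !mxE.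
exact: hF. Qed.

Lemma CM_adj n (F : 'rV[R]_N -> 'M[R]_n) : CM F -> CM (fun v => \adj (F v)).
Proof.
case: n F => [|n] F hF i j.
  by case: i.
apply: (Cf_ext (f := fun v => (-1) ^+ (j + i) * \det (row' j (col' i (F v))))).
  by move=> v; rewrite mxE.
apply: Cf_mul; first exact: Cf_cst.
by apply: Cf_det; exact: CM_minor.
Qed.

End Cont.


Section S6.
Local Open Scope classical_set_scope.
Variable R : realType.

Lemma vnormN n (x : 'cV[R]_n) : vnorm (- x) = vnorm x.
Proof. by rewrite -scaleN1r vnormZ normrN normr1 mul1r. Qed.

Lemma X_lower n1 r (X Xs : 'M[R]_(n1, r)) (P : 'M[R]_r) (d0 : R) :
  P \in unitmx -> sigma 1 P <= 3/2 -> frob (X *m P - Xs) <= d0 ->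
  d0 <= sigma r Xs ->
  forall d, (2/3) * (sigma r Xs - d0) * vnorm d <= vnorm (X *m d).
Proof.
move=> Pu hP hE hd d; have e1 := sigma_lower Xs; move: hd e1; set sg := sigma r Xs; move: sg => sg hd e1; set v := invmx P *m d.
have hd' : X *m d = X *m P *m v by rewrite -mulmxA mulKVmx.
have {}e1 : sg * vnorm v <= vnorm (Xs *m v) := e1 v.
have e2 : vnorm ((X *m P - Xs) *m v) <= d0 * vnorm v.
  by apply: le_trans (vnorm_mul _ _) _; rewrite ler_wpM2r // vnorm_ge0.
have e3 : vnorm (Xs *m v) <= vnorm (X *m d) + vnorm ((X *m P - Xs) *m v).
  rewrite -[vnorm ((X *m P - Xs) *m v)]vnormN; apply: le_trans (vnormD _ _).
  by rewrite hd' mulmxBl opprB addrC subrK lexx.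
have e4 : vnorm d <= sigma 1 P * vnorm v.
  by rewrite -{1}(mulKVmx Pu d); exact: sigma1_upper.
have v0 := vnorm_ge0 v; have d00 := vnorm_ge0 d.
have e5 : vnorm d <= 3/2 * vnorm v.
  by apply: le_trans e4 _; rewrite ler_wpM2r.
have e6 : (sg - d0) * vnorm v <= vnorm (X *m d).
  rewrite mulrBl lerBlDr; apply: le_trans e1 _; apply: le_trans e3 _; by rewrite lerD2l.
apply: le_trans e6; rewrite [2/3 * _]mulrC -mulrA; apply: ler_wpM2l; lra.
Qed.

Lemma key n1 n2 r (X Xs : 'M[R]_(n1, r)) (Y Ys : 'M[R]_(n2, r)) (P : 'M[R]_r) (d0 : R) :
  P \in unitmx -> sigma 1 P <= 3/2 -> frob (X *m P - Xs) <= d0 ->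
  frob (Y *m (invmx P)^T - Ys) <= d0 -> 0 < sigma r Xs -> d0 <= sigma r Xs / 80 ->
  forall Q, 5 * d0 / sigma r Xs < frob (Q - P) ->
  galign X Xs Y Ys P < galign X Xs Y Ys Q.
Proof.
move=> Pu hP hE hF sp hd Q hQ.
have d0p : 0 <= d0 by apply: le_trans hE; exact: frob_ge0.
have hl := X_lower Pu hP hE.
move: hd hQ sp hl; set sg := sigma r Xs; move: sg => sg hd hQ sp hl.
have hl' : forall d, 2/3 * (sg - d0) * vnorm d <= vnorm (X *m d).
  by apply: hl; lra.
have c0 : 0 <= 2/3 * (sg - d0) by lra.
have h1 := frob_lower (Q - P) c0 hl'.
have h2 : frob (X *m (Q - P)) <= frob (X *m Q - Xs) + frob (X *m P - Xs).
  rewrite -[frob (X *m P - Xs)]frobN; apply: le_trans (frobD _ _).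
  by rewrite mulmxBr opprB addrA subrK lexx.
set f := frob (Q - P) in h1 hQ.
set F := frob (X *m Q - Xs) in h2.
have F0 : 0 <= F by exact: frob_ge0.
have hQ' : 5 * d0 < sg * f by rewrite -ltr_pdivrMl // mulrC.
have hF1 : 55/24 * d0 < F.
  have : 2/3 * (sg - d0) * f >= 2/3 * (79/80) * (sg * f).
    have f0 : 0 <= f by exact: frob_ge0.
    have hh : 0 <= (sg / 80 - d0) * f by apply: mulr_ge0 => //; lra.
    nra.
  nra.
have hF2 : 2 * d0 ^+ 2 < F ^+ 2.
  have k0 : 0 <= 55/24 * d0 by lra.
  have := ltr_pXn2r (n := 2%N) isT; move=> _.
  nra.
rewrite /galign.
have g1 : frob (X *m P - Xs) ^+ 2 <= d0 ^+ 2 by rewrite ler_pXn2r // nnegrE frob_ge0.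
have g2 : frob (Y *m (invmx P)^T - Ys) ^+ 2 <= d0 ^+ 2 by rewrite ler_pXn2r // nnegrE frob_ge0.
have g3 : 0 <= frob (Y *m (invmx Q)^T - Ys) ^+ 2 by exact: sqr_ge0.
rewrite -/F; lra.
Qed.

End S6.


Section S7.
Local Open Scope classical_set_scope.
Variable R : realType.

Lemma frob0 m n : frob (0 : 'M[R]_(m, n)) = 0.
Proof.
rewrite /frob (eq_bigr (fun _ => 0)) ?big1 ?sqrtr0 // => i _.
by rewrite big1 // => j _; rewrite mxE expr0n.
Qed.

Lemma entry_le_frob m n (M : 'M[R]_(m, n)) i j : `|M i j| <= frob M.
Proof.
rewrite -sqrtr_sqr /frob ler_sqrt; last by apply: sumr_ge0 => k _; exact: sumsq_ge0.
rewrite (bigD1 i) //= (bigD1 j) //= -addrA lerDl addr_ge0 //.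
  by apply: sumr_ge0 => k _; exact: sqr_ge0.
by apply: sumr_ge0 => k _; exact: sumsq_ge0.
Qed.

Lemma Cf_frob2 N (x : 'rV[R]_N) a b (F : 'rV[R]_N -> 'M[R]_(a, b)) :
  CM x F -> Cf x (fun v => frob (F v) ^+ 2).
Proof.
move=> hF; apply: (Cf_ext (f := fun v => \sum_i \sum_j F v i j * F v i j)).
  move=> v; rewrite /frob sqr_sqrtr; last by apply: sumr_ge0 => k _; exact: sumsq_ge0.
  by apply: eq_bigr => i _; apply: eq_bigr => j _; rewrite expr2.
apply: Cf_sum => i _; apply: Cf_sum => j _; apply: Cf_mul; exact: hF.
Qed.

Lemma CM_vec r (x : 'rV[R]_(r * r)) : CM x (fun v => vec_mx v).
Proof.
move=> i j; apply: (Cf_ext (f := fun v => v 0 (mxvec_index i j))).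
  by move=> v; rewrite mxE.
exact: Cf_coord.
Qed.

Lemma exists_min n1 n2 r (X Xs : 'M[R]_(n1, r)) (Y Ys : 'M[R]_(n2, r))
  (P : 'M[R]_r) (rho : R) :
  0 <= rho -> (forall Q, frob (Q - P) <= rho -> Q \in unitmx) ->
  exists Qm, frob (Qm - P) <= rho /\ forall Q, frob (Q - P) <= rho ->
    galign X Xs Y Ys Qm <= galign X Xs Y Ys Q.
Proof.
move=> rho0 hU.
have memE : forall Q : 'M[R]_r, (frob (Q - P) ^+ 2 <= rho ^+ 2) = (frob (Q - P) <= rho).
  by move=> Q; rewrite ler_pXn2r // nnegrE frob_ge0.
pose psi (v : 'rV[R]_(r * r)) := frob (vec_mx v - P) ^+ 2.
pose A := psi @^-1` [set t | t <= rho ^+ 2].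
pose f (v : 'rV[R]_(r * r)) := galign X Xs Y Ys (vec_mx v).
pose g (v : 'rV[R]_(r * r)) := frob (X *m vec_mx v - Xs) ^+ 2 +
   frob (Y *m ((\det (vec_mx v))^-1 *: \adj (vec_mx v))^T - Ys) ^+ 2.
have A0 : A !=set0.
  exists (mxvec P); rewrite /A /psi /= mxvecK subrr frob0 expr0n /=.
  by rewrite exprn_ge0.
have Acl : closed A.
  apply: preimage_closed; last exact: closed_le.
  move=> v _; apply: Cf_frob2; apply: CM_add; first exact: CM_vec.
  exact: CM_cst.
have Abd : bounded_near (fun v : 'rV[R]_(r * r) => v) (globally A).
  rewrite /bounded_near; near=> M => v Av /=.
  have hv : frob (vec_mx v - P) <= rho by rewrite -memE.
  suff : `|v| <= rho + frob P.
    move=> h; apply: le_trans h _.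
    by near: M; apply: nbhs_pinfty_ge; rewrite realE addr_ge0 ?frob_ge0.
  rewrite [leLHS]/Num.norm /= mx_normrE; apply/bigmax_leP; split.
    by rewrite addr_ge0 ?frob_ge0.
  move=> [i k] _ /=; rewrite (ord1 i); case/mxvec_indexP: k => a b.
  have -> : v 0 (mxvec_index a b) = vec_mx v a b by rewrite mxE.
  apply: le_trans (entry_le_frob _ a b) _.
  have := frobD (vec_mx v - P) P; rewrite subrK => h; apply: le_trans h _.
  by rewrite lerD2r.
have Acp : compact A by apply: bounded_closed_compact.
have Acont : {within A, continuous f}.
  have gc : {within A, continuous g}.
    apply: continuous_in_subspaceT => v; rewrite inE => Av.
    have Qu : vec_mx v \in unitmx by apply: hU; rewrite -memE.
    apply: Cf_add; apply: Cf_frob2; apply: CM_add; try exact: CM_cst.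
      by apply: CM_mul; [exact: CM_cst | exact: CM_vec].
    apply: CM_mul; first exact: CM_cst.
    apply: CM_tr; apply: CM_scale; last by apply: CM_adj; exact: CM_vec.
    apply: Cf_inv; first by rewrite -unitfE -unitmxE.
    by apply: Cf_det; exact: CM_vec.
  apply: (subspace_eq_continuous _ gc) => v; rewrite inE => Av.
  have Qu : vec_mx v \in unitmx by apply: hU; rewrite -memE.
  by rewrite /f /g /galign /invmx /from_subspace /= Qu.
have [c cA cmin] := compact_EVT_min A0 Acp Acont.
exists (vec_mx c); split.
  by rewrite -memE; rewrite inE in cA.
move=> Q hQ; have := cmin (mxvec Q); rewrite /f mxvecK; apply.
by rewrite inE /A /psi /= mxvecK memE.
Unshelve. all: by end_near.
Qed.

End S7.


Unset Implicit Arguments. Set Strict Implicit. Set Printing Implicit Defensive.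

Theorem lemma1 (R : realType) (n1 n2 r : nat)
  (Mstar : 'M[R]_(n1, n2)) (U : 'M[R]_(n1, r)) (V : 'M[R]_(n2, r))
  (s : 'rV[R]_r)
  (X : 'M[R]_(n1, r)) (Y : 'M[R]_(n2, r)) (P : 'M[R]_r) (delta : R) :
  (0 < r)%N ->
  (* compact SVD of Mstar, rank r *)
  U^T *m U = 1%:M ->
  V^T *m V = 1%:M ->
  (forall i : 'I_r, 0 < s 0 i) ->
  (forall i j : 'I_r, (i <= j)%N -> s 0 j <= s 0 i) ->
  Mstar = U *m diag_mx s *m V^T ->
  \rank Mstar = r ->
  (* hypotheses on P and delta *)
  1 / 2 <= sigma r P ->
  sigma r P <= sigma 1 P ->
  sigma 1 P <= 3 / 2 ->
  Num.max (frob (X *m P - Xstar U s)) (frob (Y *m (invmx P)^T - Ystar V s))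
    <= delta ->
  delta <= sigma r (Xstar U s) / 80 ->
  (exists Q : 'M[R]_r, is_min_align X (Xstar U s) Y (Ystar V s) Q) /\
  (forall Q : 'M[R]_r, is_min_align X (Xstar U s) Y (Ystar V s) Q ->
     specnorm (P - Q) <= frob (P - Q) /\
     frob (P - Q) <= 5 * delta / sigma r (Xstar U s)).
Proof.
move=> r0 hU hV spos smono hM hrank hP1 hP2 hP3 hmax hdelta.
have sgp : 0 < sigma r (Xstar U s).
  have im : (r.-1 < r)%N by rewrite ltn_predL.
  have m0p : 0 < s 0 (Ordinal im) by exact: spos.
  have hm : forall i, s 0 (Ordinal im) <= s 0 i.
    move=> i; apply: smono => /=; by rewrite -ltnS prednK // ltn_ord.
  apply: lt_le_trans (sigma_ge r0 (Xstar_lower hU (ltW m0p) hm)).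
  by rewrite sqrtr_gt0.
have Pu : P \in unitmx.
  apply: unit_of_inj => w wnz; apply/eqP => Pw.
  have := sigma_lower P w; rewrite Pw vnorm0.
  have := vnorm_gt0 wnz => wp h.
  have : 1/2 * vnorm w <= 0 by apply: le_trans h; rewrite ler_wpM2r // ltW.
  by rewrite pmulr_rle0 // ?ltNge ?le_eqVlt ?wp ?orbT //; lra.
move: hmax; rewrite ge_max => /andP [hE hF].
have d0 : 0 <= delta by apply: le_trans hE; exact: frob_ge0.
set rho := 5 * delta / sigma r (Xstar U s).
have rho0 : 0 <= rho by rewrite /rho; apply: divr_ge0; [apply: mulr_ge0 => //; lra | exact: ltW].
have rho1 : rho <= 1/16.
  rewrite /rho ler_pdivrMr //.
  move: hdelta sgp; set sg := sigma r (Xstar U s) => hd sp; lra.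
have frobC : forall A B : 'M[R]_r, frob (A - B) = frob (B - A).
  by move=> A B; rewrite -frobN opprB.
have hUnit : forall Q, frob (Q - P) <= rho -> Q \in unitmx.
  move=> Q hQ; apply: unit_of_inj => w wnz; apply/eqP => Qw.
  have wp := vnorm_gt0 wnz.
  have e1 := sigma_lower P w.
  have e2 : vnorm ((P - Q) *m w) <= rho * vnorm w.
    apply: le_trans (vnorm_mul _ _) _; rewrite ler_wpM2r ?vnorm_ge0 //.
    by rewrite frobC.
  have e3 := vnormB (P *m w) ((P - Q) *m w).
  have e3e : P *m w - (P - Q) *m w = Q *m w by rewrite mulmxBl opprB addrC subrK.
  rewrite e3e Qw vnorm0 in e3.
  have e4 : sigma r P * vnorm w >= 1/2 * vnorm w by rewrite ler_wpM2r // ltW.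
  have e5 : rho * vnorm w <= 1/16 * vnorm w by rewrite ler_wpM2r // ltW.
  clear -e1 e2 e3 e4 e5 wp; lra.
have [Qm [hQm Qmin]] := exists_min X (Xstar U s) Y (Ystar V s) rho0 hUnit.
have PK : frob (P - P) <= rho by rewrite subrr frob0.
have keyP := key Pu hP3 hE hF sgp hdelta.
split.
  exists Qm; split; first exact: hUnit.
  move=> Q' _; have [h|h] := leP (frob (Q' - P)) rho; first exact: Qmin.
  apply: le_trans (Qmin _ PK) _; apply: ltW; exact: keyP.
move=> Q [Qu Qmn]; split; first exact: sigma_le_frob.
rewrite frobC leNgt; apply/negP => h.
have := keyP Q h; rewrite ltNge; move/negP; apply.
exact: Qmn.
Qed.
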